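(* Let $\mathcal X_i=\Delta^{d_i}$ for all $i$. Let $G$ be one of the following: (1) the $\alpha$-divergence $G(\pi_i,\sigma_i)=\frac1{\alpha(1-\alpha)}(1-\sum_j\pi_{ij}^\alpha\sigma_{ij}^{1-\alpha})$ with $\alpha\in(0,1)$; (2) the Rényi divergence $G(\pi_i,\sigma_i)=\frac1{\alpha-1}\ln(\sum_j\pi_{ij}^\alpha\sigma_{ij}^{1-\alpha})$ with $\alpha\in(0,1)$; (3) the reverse KL divergence $G(\pi_i,\sigma_i)=\sum_j\sigma_{ij}\ln(\sigma_{ij}/\pi_{ij})$. Let $\mu>0$ and let $\sigma$ be in the interior of $\mathcal X$. If $\pi^{\mu,\sigma}=\sigma$, then $\sigma$ is a Nash equilibrium of the original (unperturbed) game.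
   Context: Game. Let $N\ge1$. $\Delta^d=\{p\in[0,1]^d:\sum_jp_j=1\}$ denotes the probability simplex, and $\mathcal X=\prod_i\mathcal X_i$. Each $v_i:\mathcal X\to\mathbb R$ is differentiable, with block gradient $\nabla_{\pi_i}v_i$. The game is monotone: $\sum_i\langle\nabla_{\pi_i}v_i(\pi)-\nabla_{\pi_i}v_i(\pi'),\pi_i-\pi_i'\rangle\le0$ for all $\pi,\pi'$. A Nash equilibrium is a $\pi^*$ with $v_i(\pi^* )\ge v_i(\pi_i,\pi^*_{-i})$ for all $i$ and $\pi_i\in\mathcal X_i$. Perturbed equilibrium. For $\mu>0$ and $\sigma\in\mathcal X$, $\pi^{\mu,\sigma}$ is the profile with $\pi_i^{\mu,\sigma}\in\arg\max_{\pi_i\in\mathcal X_i}\{v_i(\pi_i,\pi^{\mu,\sigma}_{-i})-\mu G(\pi_i,\sigma_i)\}$ for all $i$. *)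

(* Defs.v *)
From HB Require Import structures.
From mathcomp Require Import all_boot all_order all_algebra.
From mathcomp Require Import all_classical all_reals all_analysis.
Set Implicit Arguments. Unset Strict Implicit. Unset Printing Implicit Defensive.
Import Order.TTheory GRing.Theory Num.Theory.
Import numFieldNormedType.Exports.
Local Open Scope ring_scope.

(* A strategy profile of an N-player game with strategy spaces
   X_i = Delta^{d_i} is encoded as a single row vector x : 'rV[R]_D in the
   ambient space R^D, D = sum_i d_i; the coordinate k belongs to the block of
   player [own k]. *)
Section Game.
Variables (R : realType) (N D : nat) (own : 'I_D -> 'I_N).

Definition in_block (i : 'I_N) (p : 'rV[R]_D) : Prop :=
  (forall k, own k = i -> 0 <= p ord0 k) /\
  \sum_(k < D | own k == i) p ord0 k = 1.

Definition in_X (x : 'rV[R]_D) : Prop := forall i, in_block i x.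

Definition in_interior_X (x : 'rV[R]_D) : Prop :=
  in_X x /\ forall k, 0 < x ord0 k.

Definition blk (i : 'I_N) (w : 'rV[R]_D) : 'rV[R]_D :=
  \row_k (if own k == i then w ord0 k else 0).

Definition dev (i : 'I_N) (p x : 'rV[R]_D) : 'rV[R]_D :=
  \row_k (if own k == i then p ord0 k else x ord0 k).

(* Monotone game: sum_i <grad_{pi_i} v_i(x) - grad_{pi_i} v_i(y), x_i - y_i> <= 0,
   where <grad_{pi_i} v_i(x), w_i> = 'd (v i) x (blk i w). *)
Definition monotone_game (v : 'I_N -> 'rV[R]_D -> R) : Prop :=
  forall x y, in_X x -> in_X y ->
    \sum_(i < N) ('d (v i) x (blk i (x - y)) - 'd (v i) y (blk i (x - y))) <= 0.

Definition nash (v : 'I_N -> 'rV[R]_D -> R) (s : 'rV[R]_D) : Prop :=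
  in_X s /\ forall i p, in_block i p -> v i (dev i p s) <= v i s.

Definition alpha_div (a : R) (i : 'I_N) (p s : 'rV[R]_D) : \bar R :=
  ((a * (1 - a))^-1 *
     (1 - \sum_(k < D | own k == i) p ord0 k `^ a * s ord0 k `^ (1 - a)))%:E.

Definition renyi_div (a : R) (i : 'I_N) (p s : 'rV[R]_D) : \bar R :=
  ((a - 1)^-1 *
     ln (\sum_(k < D | own k == i) p ord0 k `^ a * s ord0 k `^ (1 - a)))%:E.

(* reverse KL: sum_j s_j ln (s_j / p_j), with 0 ln(0/.) = 0 and
   value +oo when some s_j > 0 has p_j = 0 *)
Definition rkl_div (i : 'I_N) (p s : 'rV[R]_D) : \bar R :=
  if `[< exists k, [/\ own k = i, s ord0 k != 0 & p ord0 k = 0] >]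
  then +oo%E
  else (\sum_(k < D | (own k == i) && (s ord0 k != 0))
          s ord0 k * ln (s ord0 k / p ord0 k))%:E.

Definition admissible_div (G : 'I_N -> 'rV[R]_D -> 'rV[R]_D -> \bar R) : Prop :=
  (exists a, 0 < a < 1 /\ G = alpha_div a) \/
  (exists a, 0 < a < 1 /\ G = renyi_div a) \/
  G = rkl_div.

Definition perturbed_eq (v : 'I_N -> 'rV[R]_D -> R)
    (G : 'I_N -> 'rV[R]_D -> 'rV[R]_D -> \bar R) (mu : R) (s pi : 'rV[R]_D) : Prop :=
  in_X pi /\
  forall i p, in_block i p ->
    ((v i (dev i p pi))%:E - mu%:E * G i p s <= (v i pi)%:E - mu%:E * G i pi s)%E.

End Game.

(* Main.v *)
Require Import Defs.
From HB Require Import structures.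
From mathcomp Require Import all_boot all_order all_algebra.
From mathcomp Require Import all_classical all_reals all_analysis.
From mathcomp Require Import ring lra.
Import Order.TTheory GRing.Theory Num.Theory.
Import numFieldNormedType.Exports.
Set Implicit Arguments. Unset Strict Implicit.
Local Open Scope classical_set_scope.
Local Open Scope ring_scope.
Lemma powR_expR (R : realType) (a q s : R) : 0 < q -> 0 < s ->
  q `^ a * s `^ (1 - a) = expR (a * ln q + (1 - a) * ln s).
Proof.
by move=> q0 s0; rewrite /powR !gt_eqF // expRD.
Qed.

Lemma amgm (R : realType) (a q s : R) : 0 < a < 1 -> 0 < q -> 0 < s ->
  s * q <= q `^ a * s `^ (1 - a) * (a * s + (1 - a) * q).
Proof.
move=> /andP[a0 a1] q0 s0; rewrite powR_expR //.
set L := a * ln q + (1 - a) * ln s.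
have h1 := expR_ge1Dx (L - ln q).
have h2 := expR_ge1Dx (L - ln s).
rewrite expRD expRN lnK ?posrE // in h1.
rewrite expRD expRN lnK ?posrE // in h2.
set S := expR L in h1 h2 *.
have e1 : S = (S * q^-1) * q by rewrite -mulrA mulVf ?mulr1 ?gt_eqF.
have e2 : S = (S * s^-1) * s by rewrite -mulrA mulVf ?mulr1 ?gt_eqF.
set u := S * q^-1 in h1 e1 *; set w := S * s^-1 in h2 e2 *.
have : 1 <= a * u + (1 - a) * w.
  have H1 := ler_wpM2l (ltW a0) h1.
  have H2 := ler_wpM2l (ltW (eqbRL (subr_gt0 a 1) a1)) h2.
  have : a * (1 + (L - ln q)) + (1 - a) * (1 + (L - ln s)) = 1 by rewrite /L; ring.
  lra.
move=> H.
have -> : S * (a * s + (1 - a) * q) = s * q * (a * u + (1 - a) * w).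
  have -> : S * (a * s + (1 - a) * q) = a * s * S + (1 - a) * q * S by ring.
  rewrite {1}e1 e2; ring.
rewrite -{1}(mulr1 (s * q)); apply: ler_wpM2l => //.
by rewrite mulr_ge0 // ltW.
Qed.

Lemma alpha_term (R : realType) (a q s S : R) : 0 < a < 1 -> 0 < q -> 0 < s ->
  s * q <= S * (a * s + (1 - a) * q) ->
  s + a * (q - s) - a * (q - s) ^+ 2 / q <= S.
Proof.
move=> /andP[a0 a1] q0 s0 H.
have m0 : 0 < a * s + (1 - a) * q by rewrite addr_gt0 // mulr_gt0 // subr_gt0.
rewrite -(ler_pM2r m0); apply: le_trans H.
have -> : s * q = (s + a * (q - s) - a * (q - s) ^+ 2 / q) * (a * s + (1 - a) * q)
   + a ^+ 2 * (q - s) ^+ 2 * s / q.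
  by field; rewrite gt_eqF.
rewrite lerDl; apply: divr_ge0; last exact: ltW.
by rewrite mulr_ge0 ?(ltW s0) // mulr_ge0 // sqr_ge0.
Qed.

Lemma renyi_term (R : realType) (a q s S : R) : 0 < a < 1 -> 0 < q -> 0 < s ->
  s / 2 <= q -> s * q <= S * (a * s + (1 - a) * q) -> s / 2 <= S.
Proof.
move=> /andP[a0 a1] q0 s0 qs H.
have m0 : 0 < a * s + (1 - a) * q by rewrite addr_gt0 // mulr_gt0 // subr_gt0.
rewrite -(ler_pM2r m0); apply: le_trans H.
have h1 : 0 <= (1 + a) * q - a * s.
  have := ler_wpM2l (ltW (addr_gt0 ltr01 a0)) qs. nra.
have := mulr_ge0 (ltW s0) h1. nra.
Qed.

Lemma rkl_term (R : realType) (q s : R) : 0 < q -> 0 < s ->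
  s * ln (s / q) <= (q - s) ^+ 2 / q - (q - s).
Proof.
move=> q0 s0.
have h : ln (1 + (s / q - 1)) <= s / q - 1.
  by apply: le_ln1Dx; rewrite ltrBrDl subrr divr_gt0.
rewrite (_ : 1 + (s / q - 1) = s / q) in h; last by ring.
have -> : (q - s) ^+ 2 / q - (q - s) = s * (s / q - 1) by field; rewrite gt_eqF.
by rewrite ler_pM2l.
Qed.

Lemma G_bound (R : realType) (N D : nat) (own : 'I_D -> 'I_N)
  (G : 'I_N -> 'rV[R]_D -> 'rV[R]_D -> \bar R) (HG : admissible_div own G) :
  exists c : R, 0 <= c /\
  forall i (s q : 'rV[R]_D), in_interior_X own s -> in_block own i q ->
    (forall k, own k = i -> s ord0 k / 2 <= q ord0 k) ->
    G i s s = 0%:E /\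
    exists g : R, G i q s = g%:E /\
      g <= c * \sum_(k < D | own k == i) (q ord0 k - s ord0 k) ^+ 2 / q ord0 k.
Proof.
have common : forall i (s q : 'rV[R]_D), in_interior_X own s -> in_block own i q ->
    (forall k, own k = i -> s ord0 k / 2 <= q ord0 k) ->
    [/\ forall k, 0 < s ord0 k, forall k, own k = i -> 0 < q ord0 k,
     \sum_(k < D | own k == i) s ord0 k = 1, \sum_(k < D | own k == i) q ord0 k = 1 &
     0 <= \sum_(k < D | own k == i) (q ord0 k - s ord0 k) ^+ 2 / q ord0 k].
  move=> i s q [HsX Hs0] [_ Hq1] Hqs.
  have Hq0 : forall k, own k = i -> 0 < q ord0 k.
    by move=> k /Hqs; apply: lt_le_trans; rewrite divr_gt0.
  split => //; first by case: (HsX i).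
  apply: sumr_ge0 => k /eqP /Hq0 qk.
  by rewrite divr_ge0 ?sqr_ge0 ?ltW.
case: HG => [[a [a01 ->]]|[[a [a01 ->]]| ->]].
-
  have /andP[a0 a1] := a01.
  exists (2 / (1 - a)); split; first by rewrite divr_ge0 // ltW // subr_gt0.
  move=> i s q Hs Hq Hqs.
  have [Hs0 Hq0 Hs1 Hq1 HQ] := common i s q Hs Hq Hqs.
  set Q := \sum_(k < D | own k == i) _ in HQ *.
  split.
    rewrite /alpha_div (eq_bigr (fun k => s ord0 k)); last first.
      move=> k _; rewrite powR_expR // -mulrDl addrC subrK mul1r lnK //.
      by rewrite posrE.
    by rewrite Hs1 subrr mulr0.
  eexists; split; first reflexivity.
  set S := \sum_(k < D | own k == i) _.
  have HS : 1 - a * Q <= S.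
    have -> : 1 - a * Q = \sum_(k < D | own k == i)
        (s ord0 k + a * (q ord0 k - s ord0 k) - a * (q ord0 k - s ord0 k) ^+ 2 / q ord0 k).
      rewrite sumrB big_split /= -!mulr_sumr sumrB Hs1 Hq1 /Q.
      rewrite subrr mulr0 addr0 mulr_sumr; congr (_ - _).
      by apply: eq_bigr => k _; rewrite mulrA.
    apply: ler_sum => k /eqP ki.
    apply: alpha_term => //; first exact: Hq0.
    exact: amgm a01 (Hq0 _ ki) (Hs0 k).
  have -> : 2 / (1 - a) * Q = (a * (1 - a))^-1 * (2 * a * Q) by field; rewrite !gt_eqF // subr_gt0.
  rewrite ler_pM2l ?invr_gt0 ?mulr_gt0 ?subr_gt0 //.
  have := mulr_ge0 (ltW a0) HQ. lra.
-
  have /andP[a0 a1] := a01.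
  exists (2 / (1 - a)); split; first by rewrite divr_ge0 // ltW // subr_gt0.
  move=> i s q Hs Hq Hqs.
  have [Hs0 Hq0 Hs1 Hq1 HQ] := common i s q Hs Hq Hqs.
  set Q := \sum_(k < D | own k == i) _ in HQ *.
  split.
    rewrite /renyi_div (eq_bigr (fun k => s ord0 k)); last first.
      move=> k _; rewrite powR_expR // -mulrDl addrC subrK mul1r lnK //.
      by rewrite posrE.
    by rewrite Hs1 ln1 mulr0.
  eexists; split; first reflexivity.
  set S := \sum_(k < D | own k == i) _.
  have HS : 1 - a * Q <= S.
    have -> : 1 - a * Q = \sum_(k < D | own k == i)
        (s ord0 k + a * (q ord0 k - s ord0 k) - a * (q ord0 k - s ord0 k) ^+ 2 / q ord0 k).
      rewrite sumrB big_split /= -!mulr_sumr sumrB Hs1 Hq1 /Q.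
      rewrite subrr mulr0 addr0 mulr_sumr; congr (_ - _).
      by apply: eq_bigr => k _; rewrite mulrA.
    apply: ler_sum => k /eqP ki.
    apply: alpha_term => //; first exact: Hq0.
    exact: amgm a01 (Hq0 _ ki) (Hs0 k).
  have HS2 : 1 / 2 <= S.
    have -> : 1 / 2 = \sum_(k < D | own k == i) s ord0 k / 2 by rewrite -mulr_suml Hs1.
    apply: ler_sum => k /eqP ki.
    exact: (renyi_term a01 (Hq0 _ ki) (Hs0 k) (Hqs _ ki) (amgm a01 (Hq0 _ ki) (Hs0 k))).
  have S0 : 0 < S by apply: lt_le_trans HS2; rewrite divr_gt0.
  set u := S^-1.
  have uS : u * S = 1 by rewrite mulVf ?gt_eqF.
  have u0 : 0 < u by rewrite invr_gt0.
  have u2 : u <= 2.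
    have := ler_wpM2l (ltW u0) HS2. rewrite uS. lra.
  have hl : - ln S <= u - 1.
    have h : ln (1 + (u - 1)) <= u - 1 by apply: le_ln1Dx; lra.
    rewrite -lnV ?posrE //; move: h; rewrite (_ : 1 + (u - 1) = u) //; ring.
  have h1 : u - 1 <= 2 * a * Q.
    have e : u - 1 = u * (1 - S) by rewrite mulrBr uS mulr1.
    have HS' : 1 - S <= a * Q by lra.
    have := ler_wpM2l (ltW u0) HS'.
    have := ler_wpM2r (mulr_ge0 (ltW a0) HQ) u2.
    rewrite e; lra.
  have -> : (a - 1)^-1 * ln S = (1 - a)^-1 * (- ln S).
    by rewrite -opprB invrN mulNr mulrN.
  have -> : 2 / (1 - a) * Q = (1 - a)^-1 * (2 * Q) by ring.
  rewrite ler_pM2l ?invr_gt0 ?subr_gt0 //.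
  have := mulr_ge0 (ltW a0) HQ.
  have := ler_wpM2r HQ (ltW a1). lra.
-
  exists 1; split => //.
  move=> i s q Hs Hq Hqs.
  have [Hs0 Hq0 Hs1 Hq1 HQ] := common i s q Hs Hq Hqs.
  set Q := \sum_(k < D | own k == i) _ in HQ *.
  have nz : forall k, s ord0 k != 0 by move=> k; rewrite gt_eqF.
  split.
    rewrite /rkl_div asboolF; last by move=> [k [_ /eqP H H2]]; apply: H.
    by rewrite big1 // => k _; rewrite divff ?nz // ln1 mulr0.
  rewrite /rkl_div asboolF; last first.
    by move=> [k [ki _ qk]]; have := Hq0 k ki; rewrite qk ltxx.
  eexists; split; first reflexivity.
  rewrite mul1r (eq_bigl (fun k => own k == i)); last by move=> k; rewrite nz andbT.
  apply: le_trans (ler_sum _ (fun k (ki : own k == i) => rkl_term (Hq0 k (eqP ki)) (Hs0 k))) _.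
  by rewrite sumrB [X in _ - X]sumrB Hq1 Hs1 subrr subr0.
Qed.

Lemma concave_step (R : realType) (f g : R -> R) (t : R) :
  0 < t < 1 ->
  (forall u : R, 0 <= u <= 1 -> is_derive u (1:R) f (g u)) ->
  (forall a b : R, 0 <= a -> a <= b -> b <= 1 -> g b <= g a) ->
  t * (f 1 - f 0) <= f t - f 0.
Proof.
move=> /andP[t0 t1] Hd Hg.
have Hc : forall a b, 0 <= a -> b <= 1 -> {within `[a, b]%classic, continuous f}.
  move=> a b a0 b1; apply: derivable_within_continuous => u.
  rewrite in_itv /= => /andP[au ub].
  by have := Hd u; rewrite (le_trans a0 au) (le_trans ub b1) => /(_ isT) [].
have [c1 c1i E1] : exists2 c, c \in `]0, t[%R & f t - f 0 = g c * (t - 0).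
  apply: MVT => //; last exact: Hc (lexx _) (ltW t1).
  move=> u; rewrite in_itv /= => /andP[u0 ut]; apply: Hd.
  by rewrite ltW //= ltW // (lt_trans ut t1).
have [c2 c2i E2] : exists2 c, c \in `]t, 1[%R & f 1 - f t = g c * (1 - t).
  apply: MVT => //; last exact: Hc (ltW t0) (lexx _).
  move=> u; rewrite in_itv /= => /andP[tu u1]; apply: Hd.
  by rewrite ltW //= ?ltW // (lt_trans t0 tu).
move: c1i c2i; rewrite !in_itv /= => /andP[c10 c1t] /andP[tc2 c21].
have g12 : g c2 <= g c1 by apply: Hg; rewrite ?ltW // (lt_trans c1t tc2).
have -> : f 1 - f 0 = (f 1 - f t) + (f t - f 0) by ring.
rewrite E1 E2 subr0.
have h : 0 <= t * (1 - t) by rewrite mulr_ge0 ?subr_ge0 ?ltW.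
have := ler_wpM2l h g12.
nra.
Qed.

Lemma deriv_line (R : realType) (n : nat) (h : 'rV[R]_n -> R) (s w : 'rV[R]_n) (u : R) :
  differentiable h (s + u *: w) ->
  is_derive u (1:R) (fun t : R => h (s + t *: w)) ('d h (s + u *: w) w).
Proof.
move=> dh.
have E : (fun k : R => k^-1 *: (((fun t : R => h (s + t *: w)) \o shift u) (k *: 1) - h (s + u *: w)))
  = (fun k : R => k^-1 *: ((h \o shift (s + u *: w)) (k *: w) - h (s + u *: w))).
  apply/funext => k /=; congr (_ *: (_ - _)); congr (h _).
  by rewrite [_%:A]mulr1 scalerDl addrCA.
split.
  have := @diff_derivable R _ _ h (s + u *: w) w dh.
  by rewrite /derivable E => H.
rewrite /derive E.
exact: (deriveE w dh).
Qed.

Lemma blk_blk (R : realType) (N D : nat) (own : 'I_D -> 'I_N) (i j : 'I_N) (c : R) (z : 'rV[R]_D) :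
  blk own j (c *: blk own i z) = if j == i then c *: blk own i z else 0.
Proof.
case: (eqVneq j i) => [->|ji]; apply/rowP => k; rewrite !mxE.
  by case: eqP => _ //; rewrite mulr0.
case: (eqVneq (own k) j) => // okj.
by rewrite ifN ?mulr0 // okj.
Qed.

Lemma sum_blk (R : realType) (N D : nat) (own : 'I_D -> 'I_N) (i j : 'I_N) (p s : 'rV[R]_D) :
  in_block own i p -> in_block own i s ->
  \sum_(k < D | own k == j) blk own i (p - s) ord0 k = 0.
Proof.
move=> [_ Hp] [_ Hs]; case: (eqVneq j i) => [->|ji].
  rewrite (eq_bigr (fun k => p ord0 k - s ord0 k)); last first.
    by move=> k ki; rewrite !mxE ki.
  by rewrite sumrB Hp Hs subrr.
by rewrite big1 // => k /eqP okj; rewrite !mxE okj ifN.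
Qed.

Lemma d_blk0 (R : realType) (N D : nat) (own : 'I_D -> 'I_N) (h : 'rV[R]_D -> R) (x : 'rV[R]_D)
   (i j : 'I_N) (c : R) (z : 'rV[R]_D) : j != i -> 'd h x (blk own j (c *: blk own i z)) = 0.
Proof. move=> ji. rewrite blk_blk (negbTE ji). exact: raddf0. Qed.

Lemma d_blkZ (R : realType) (N D : nat) (own : 'I_D -> 'I_N) (h : 'rV[R]_D -> R) (x : 'rV[R]_D)
   (i : 'I_N) (c : R) (z : 'rV[R]_D) : 'd h x (blk own i (c *: blk own i z)) = c * 'd h x (blk own i z).
Proof. rewrite blk_blk eqxx. exact: linearZ. Qed.

Unset Implicit Arguments.

Theorem lemma17 (R : realType) (N D : nat) (own : 'I_D -> 'I_N)
  (v : 'I_N -> 'rV[R]_D -> R)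
  (Hdiff : forall i x, in_X own x -> differentiable (v i) x)
  (Hmono : monotone_game own v)
  (G : 'I_N -> 'rV[R]_D -> 'rV[R]_D -> \bar R)
  (HG : admissible_div own G)
  (mu : R) (Hmu : 0 < mu)
  (sigma : 'rV[R]_D) (Hsigma : in_interior_X own sigma)
  (Hfix : perturbed_eq own v G mu sigma sigma) :
  nash own v sigma.
Proof.
have [c [c0 HGb]] := G_bound HG.
set s := sigma in Hsigma Hfix *.
have [HsX Hs0] := Hsigma.
split => // i p Hp.
have [Hp0 Hp1] := Hp.
have [Hsi0 Hsi1] := HsX i.
set w := blk own i (p - s).
have [x xE] : {x : R -> 'rV[R]_D | forall t, x t = s + t *: w} by exists (fun t => s + t *: w).
pose f (t : R) := v i (x t).
pose qt (t : R) := s + t *: (p - s).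
have Hw : forall k, w ord0 k = if own k == i then p ord0 k - s ord0 k else 0.
  by move=> k; rewrite !mxE.
have F1 : forall t, dev own i (qt t) s = x t.
  move=> t; rewrite xE; apply/rowP => k; rewrite !mxE.
  by case: eqP => _; rewrite ?mulr0 ?addr0.
have F2 : dev own i p s = x 1.
  rewrite -F1; apply/rowP => k; rewrite !mxE.
  by case: eqP => _ //; rewrite mul1r addrC subrK.
have F3 : x 0 = s by rewrite xE scale0r addr0.
have nonneg : forall t k, 0 <= t <= 1 -> own k = i -> 0 <= s ord0 k + t * (p ord0 k - s ord0 k).
  move=> t k /andP[t0 t1] ki.
  have := Hp0 k ki; have := Hs0 k; have := mulr_ge0 t0 (Hp0 k ki).
  have := mulr_ge0 (eqbRL (subr_ge0 t 1) t1) (ltW (Hs0 k)). nra.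
have F4 : forall t, 0 <= t <= 1 -> in_X own (x t).
  move=> t t01 j; split.
    move=> k kj; rewrite xE /w !mxE; case: (eqVneq (own k) i) => [ki|ki].
      exact: nonneg.
    by rewrite mulr0 addr0; case: (HsX j) => + _; apply.
  rewrite (eq_bigr (fun k => s ord0 k + t * w ord0 k)); last by move=> k _; rewrite xE !mxE.
  rewrite big_split /= -mulr_sumr sum_blk // mulr0 addr0.
  by case: (HsX j).
have F5 : forall t, 0 <= t <= 1 -> in_block own i (qt t).
  move=> t t01; split.
    by move=> k ki; rewrite !mxE; exact: nonneg.
  rewrite (eq_bigr (fun k => s ord0 k + t * (p ord0 k - s ord0 k))); last by move=> k _; rewrite !mxE.
  by rewrite big_split /= -mulr_sumr sumrB Hp1 Hsi1 subrr mulr0 addr0.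
have F6 : forall t, 0 <= t <= 1/2 -> forall k, own k = i -> s ord0 k / 2 <= qt t ord0 k.
  move=> t /andP[t0 t1] k ki; rewrite !mxE.
  have := Hp0 k ki; have := Hs0 k; have := mulr_ge0 t0 (Hp0 k ki).
  have := mulr_ge0 (eqbRL (subr_ge0 t (1/2)) t1) (ltW (Hs0 k)). nra.
pose K := \sum_(k < D | own k == i) 2 * (p ord0 k - s ord0 k) ^+ 2 / s ord0 k.
have F7 : forall t, 0 < t <= 1/2 ->
    \sum_(k < D | own k == i) (qt t ord0 k - s ord0 k) ^+ 2 / qt t ord0 k <= t ^+ 2 * K.
  move=> t /andP[t0 t1]; rewrite /K mulr_sumr; apply: ler_sum => k /eqP ki.
  have t01 : 0 <= t <= 1/2 by rewrite ltW.
  have hq := F6 t t01 k ki.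
  have qpos : 0 < qt t ord0 k by apply: lt_le_trans hq; rewrite divr_gt0.
  have hinv : (qt t ord0 k)^-1 <= 2 / s ord0 k.
    rewrite -[2 / s ord0 k]invf_div lef_pV2 ?posrE ?divr_gt0 //.
  have -> : qt t ord0 k - s ord0 k = t * (p ord0 k - s ord0 k) by rewrite !mxE; ring.
  have -> : t ^+ 2 * (2 * (p ord0 k - s ord0 k) ^+ 2 / s ord0 k)
      = (t * (p ord0 k - s ord0 k)) ^+ 2 * (2 / s ord0 k) by ring.
  by apply: ler_wpM2l => //; rewrite sqr_ge0.
have F8 : forall t, 0 < t <= 1/2 -> f t - f 0 <= mu * c * (t ^+ 2 * K).
  move=> t /andP[t0 t1].
  have t01 : 0 <= t <= 1/2 by rewrite ltW.
  have t01' : 0 <= t <= 1 by rewrite ltW //= (le_trans t1) // ler_pdivrMr // mul1r ler1n.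
  have [Gss [g [Gq gle]]] := HGb i s (qt t) Hsigma (F5 t t01') (F6 t t01).
  have := Hfix.2 i (qt t) (F5 t t01').
  rewrite Gss Gq F1 -!EFinM -!EFinB lee_fin mulr0 subr0 => H.
  have := ler_wpM2l (ltW Hmu) (le_trans gle (ler_wpM2l c0 (F7 t (introT andP (conj t0 t1))))).
  rewrite /f F3; lra.
pose g (u : R) := 'd (v i) (x u) w.
have Hder : forall u : R, 0 <= u <= 1 -> is_derive u (1:R) f (g u).
  move=> u u01; have fE : f = (fun t => v i (s + t *: w)) by apply/funext => t; rewrite /f xE.
  rewrite fE /g xE; apply: deriv_line; rewrite -xE; apply: Hdiff; exact: F4.
have Hmon : forall a b : R, 0 <= a -> a <= b -> b <= 1 -> g b <= g a.
  move=> a b a0 ab b1.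
  have a01 : 0 <= a <= 1 by rewrite a0 (le_trans ab b1).
  have b01 : 0 <= b <= 1 by rewrite (le_trans a0 ab) b1.
  have := Hmono (x b) (x a) (F4 b b01) (F4 a a01).
  have -> : x b - x a = (b - a) *: w.
    by rewrite !xE scalerBl opprD addrACA subrr add0r.
  have -> : \sum_(j < N) ('d (v j) (x b) (blk own j ((b - a) *: w)) -
      'd (v j) (x a) (blk own j ((b - a) *: w)))
      = \sum_(j < N) (if j == i then (b - a) * (g b - g a) else 0).
    apply: eq_bigr => j _; case: eqP => [->|/eqP ji].
      rewrite /w mulrBr; congr (_ - _).
        exact: d_blkZ.
      exact: d_blkZ.
    rewrite /w -[RHS](subrr (0:R)); congr (_ - _); exact: d_blk0.
  have sumE : forall y : R, \sum_(j < N) (if j == i then y else 0) = y.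
    by move=> y; rewrite -big_mkcond big_pred1_eq.
  rewrite sumE.
  case: (eqVneq a b) => [<-|anb]; first by move=> _; exact: lexx.
  have ab' : 0 < b - a by rewrite subr_gt0 lt_neqAle anb.
  move: (g b) (g a) => y z.
  by rewrite pmulr_rle0 // subr_le0.
have F9 : forall t : R, 0 < t < 1 -> t * (f 1 - f 0) <= f t - f 0.
  by move=> t t01; apply: (concave_step (f:=f) (g:=g) t01 Hder Hmon).
have HK : 0 <= K.
  apply: sumr_ge0 => k _; apply: divr_ge0; last exact: ltW.
  by apply: mulr_ge0 => //; rewrite sqr_ge0.
have HM : 0 <= mu * c * K by rewrite !mulr_ge0 // ltW.
have key : forall t : R, 0 < t <= 1/2 -> t * (f 1 - f 0) <= mu * c * K * (t * t).
  move=> t /andP[t0 t1].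
  have t1' : t < 1 by apply: le_lt_trans t1 _; rewrite ltr_pdivrMr // mul1r ltr1n.
  apply: le_trans (F9 t _) _; first by rewrite t0.
  apply: le_trans (F8 t _) _; first by rewrite t0.
  by rewrite (_ : mu * c * K * (t * t) = mu * c * (t ^+ 2 * K)) //; ring.
rewrite F2 -[X in _ <= v i X]F3.
change (f 1 <= f 0).
move: key; move: (f 1) (f 0) (mu * c * K) HM => f1 f0 M HM key.
rewrite leNgt; apply/negP => H.
set d := f1 - f0.
have d0 : 0 < d by rewrite subr_gt0.
have den : 0 < 2 * M + 2 + 2 * d.
  have : 0 < 2 * d by rewrite mulr_gt0.
  have : 0 <= 2 * M by rewrite mulr_ge0.
  lra.
set t := d / (2 * M + 2 + 2 * d).
have tE : t * (2 * M + 2 + 2 * d) = d by rewrite divfK // gt_eqF.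
have t0 : 0 < t by rewrite divr_gt0.
have t1 : t <= 1/2.
  have : 2 * t * (2 * M + 2 + 2 * d) - 1 * (2 * M + 2 + 2 * d) <= 0 by nra.
  rewrite -mulrBl pmulr_lle0 // subr_le0 => h.
  by rewrite ler_pdivlMr // mulrC.
have := key t (introT andP (conj t0 t1)).
rewrite -/d => h.
have h2 : d <= M * t.
  by rewrite -(ler_pM2l t0) (_ : t * (M * t) = M * (t * t)) //; ring.
nra.
Qed.
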